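(* Let $i\in\{3\frac{1}{2},4,5\}$. Let $\mathscr{P}$ be a topological property which is closed hereditary, co-local, and preserved under finite closed sums. If $X$ is a locally connected $T_i$-space all of whose components are non-compact and have $\mathscr{P}$, then $X$ has a $T_i$ one-point connectification which has $\mathscr{P}$.
   Context: Conventions: $T_{3\frac12}$ = completely regular and $T_1$; $T_4$ = normal and $T_1$; $T_5$ = hereditarily normal (every subspace normal) and $T_1$. A one-point connectification of a space $X$ is a connected space $Y$ which contains $X$ as a dense subspace and such that $Y\setminus X$ is a singleton. A topological property $\mathscr{P}$ is: closed hereditary if every closed subspace of a space with $\mathscr{P}$ has $\mathscr{P}$; preserved under finite closed sums if every space which is a finite union of closed subspaces each having $\mathscr{P}$ has $\mathscr{P}$; co-local if a space $X$ has $\mathscr{P}$ whenever there are a point $p\in X$ and an open base $\mathfrak{B}$ at $p$ such that $X\setminus B$ has $\mathscr{P}$ for every $B\in\mathfrak{B}$. *)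

(* Defs.v *)
From HB Require Import structures.
From mathcomp Require Import all_boot all_order all_algebra.
From mathcomp Require Import all_classical all_reals all_analysis.
From mathcomp Require Import Rstruct Rstruct_topology.
From Stdlib Require Import Rdefinitions.

Set Implicit Arguments.
Unset Strict Implicit.
Unset Printing Implicit Defensive.

Local Open Scope classical_set_scope.

(* Subspaces: for A : set X, [set_type A] carries the subspace (initial)
   topology induced by the inclusion (library instance, subtype_topology.v). *)

Definition homeomorphic (X Y : topologicalType) : Prop :=
  exists (f : X -> Y) (g : Y -> X),
    continuous f /\ continuous g /\ cancel f g /\ cancel g f.

Definition topological_property (P : topologicalType -> Prop) : Prop :=
  forall X Y : topologicalType, homeomorphic X Y -> P X -> P Y.

Definition closed_hereditary (P : topologicalType -> Prop) : Prop :=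
  forall (X : topologicalType) (A : set X), closed A -> P X -> P (set_type A).

Definition finite_closed_sums (P : topologicalType -> Prop) : Prop :=
  forall (X : topologicalType) (n : nat) (A : 'I_n -> set X),
    (forall i, closed (A i)) -> (forall i, P (set_type (A i))) ->
    \bigcup_(i in [set: 'I_n]) A i = [set: X] -> P X.

Definition open_base_at (X : topologicalType) (p : X) (B : set (set X)) : Prop :=
  (forall b, B b -> open b /\ b p) /\
  (forall U, nbhs p U -> exists2 b, B b & b `<=` U).

Definition co_local (P : topologicalType -> Prop) : Prop :=
  forall (X : topologicalType) (p : X) (B : set (set X)),
    open_base_at p B -> (forall b, B b -> P (set_type (~` b))) -> P X.

Definition T1_space (X : topologicalType) : Prop := accessible_space X.

Definition completely_regular (X : topologicalType) : Prop :=
  forall (a : X) (B : set X), closed B -> ~ B a ->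
    exists f : X -> R, continuous f /\ f a = 0%R /\
      (forall b, B b -> f b = 1%R) /\
      (forall x, (0 <= f x)%R /\ (f x <= 1)%R).

Definition hereditarily_normal (X : topologicalType) : Prop :=
  forall A : set X, normal_space (set_type A).

Inductive sep_index := T3half | T4 | T5.

Definition Ti (i : sep_index) (X : topologicalType) : Prop :=
  match i with
  | T3half => completely_regular X /\ T1_space X
  | T4 => normal_space X /\ T1_space X
  | T5 => hereditarily_normal X /\ T1_space X
  end.

Definition locally_connected (X : topologicalType) : Prop :=
  forall (x : X) (U : set X), nbhs x U ->
    exists V : set X, [/\ open V, V x, connected V & V `<=` U].

Definition embedding (X Y : topologicalType) (e : X -> Y) : Prop :=
  [/\ injective e, continuous e &
      forall U : set X, open U -> exists2 V : set Y, open V & e @` U = V `&` range e].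

Definition one_point_connectification (X Y : topologicalType) (e : X -> Y) : Prop :=
  [/\ embedding e, connected [set: Y], dense (range e) &
      exists p : Y, ~` range e = [set p]].

(* Main.v *)
Require Import Defs.
From HB Require Import structures.
From mathcomp Require Import all_boot all_order all_algebra.
From mathcomp Require Import all_classical all_reals all_analysis.
From mathcomp Require Import Rstruct Rstruct_topology.
From mathcomp Require Import ring lra.
Set Implicit Arguments.
Unset Strict Implicit.
Unset Printing Implicit Defensive.
Import Order.TTheory GRing.Theory Num.Theory.
Local Open Scope classical_set_scope.
Local Open Scope ring_scope.

Notation RR := Rdefinitions.R.

Section general.

Lemma st_open (T : topologicalType) (A : set T) (U : set (set_type A)) :
  open U <-> exists2 O, open O & U = set_val @^-1` O.
Proof.
split; first by case=> O oO <-; exists O.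
by case=> O oO ->; exists O.
Qed.

Lemma st_val_cont (T : topologicalType) (A : set T) :
  continuous (set_val : set_type A -> T).
Proof. exact: initial_continuous. Qed.

Lemma st_cont_into (Z T : topologicalType) (A : set T) (f : Z -> set_type A) :
  continuous (set_val \o f) -> continuous f.
Proof. exact: continuous_comp_initial. Qed.

Definition sepprop (T : topologicalType) := forall A B : set T,
  closure A `&` B = set0 -> A `&` closure B = set0 ->
  exists U V, [/\ open U, open V, A `<=` U, B `<=` V & U `&` V = set0].

Lemma sep_normal (T : topologicalType) : sepprop T -> normal_space T.
Proof.
move=> sT; apply/(@normal_openP Rdefinitions.R) => A B cA cB AB.
apply: sT; first by rewrite -(closure_id A).1.
by rewrite -(closure_id B).1.
Qed.

Lemma sep_HN (T : topologicalType) : sepprop T -> hereditarily_normal T.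
Proof.
move=> sT S; apply/(@normal_openP Rdefinitions.R) => A B cA cB AB.
have key : forall A B : set (set_type S), closed A -> A `&` B = set0 ->
    closure (set_val @` A) `&` (set_val @` B) = set0.
  move=> A1 B1 cA1 AB1; apply/seteqP; split => // y [cl [s Bs sb]].
  have : open (~` A1) by exact: closed_openC.
  case/st_open=> O oO eO.
  have Os : O (set_val s).
    have : (~` A1) s by move=> A1s; have : (A1 `&` B1) s by []; rewrite AB1.
    by rewrite eO.
  have [_ [[a Aa <-] Oa]] := cl O (open_nbhs_nbhs (conj oO (eq_ind _ O Os _ sb))).
  by have : (~` A1) a by rewrite eO.
have k2 : (set_val @` A) `&` closure (set_val @` B) = set0.
  by rewrite setIC; apply: key => //; rewrite setIC.
have [U0 [V0 [oU oV AU BV UV]]] := sT (set_val @` A) (set_val @` B)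
   (key _ _ cA AB) k2.
exists (set_val @^-1` U0), (set_val @^-1` V0); split.
  - by apply/st_open; exists U0.
  - by apply/st_open; exists V0.
  - by move=> a Aa; apply: AU; exists a.
  - by move=> b Bb; apply: BV; exists b.
  - by rewrite -preimage_setI UV preimage_set0.
Qed.

Lemma HN_sep (T : topologicalType) : hereditarily_normal T -> sepprop T.
Proof.
move=> hT A B clAB AclB.
pose S := ~` (closure A `&` closure B).
have oS : open S by apply: closed_openC; apply: closedI; exact: closed_closure.
have := hT S; move/(@normal_openP Rdefinitions.R).
move=> /(_ (set_val @^-1` closure A) (set_val @^-1` closure B)) [].
- by apply: (proj1 (continuous_closedP _) (@st_val_cont _ S)); exact: closed_closure.
- by apply: (proj1 (continuous_closedP _) (@st_val_cont _ S)); exact: closed_closure.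
- apply/seteqP; split => // s [s1 s2]; have := set_valP s; rewrite /S.
  by move=> /(_ (conj s1 s2)).
move=> U' [V' [oU' oV' AU' BV' UV']].
case/st_open: oU' => U0 oU0 eU; case/st_open: oV' => V0 oV0 eV.
exists (U0 `&` S), (V0 `&` S); split.
- exact: openI.
- exact: openI.
- move=> a Aa.
  have Sa : S a.
    by move=> [_ clBa]; have : (A `&` closure B) a by []; rewrite AclB.
  split=> //; have : U' (exist _ a (mem_set Sa)).
    by apply: AU'; apply: subset_closure.
  by rewrite eU.
- move=> b Bb.
  have Sb : S b.
    by move=> [clAb _]; have : (closure A `&` B) b by []; rewrite clAB.
  split=> //; have : V' (exist _ b (mem_set Sb)).
    by apply: BV'; apply: subset_closure.
  by rewrite eV.
- apply/seteqP; split => // x [[Ux Sx] [Vx _]].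
  have : (U' `&` V') (exist _ x (mem_set Sx)) by rewrite eU eV.
  by rewrite UV'.
Qed.

End general.

Definition crR (X : topologicalType) := forall (a : X) (B : set X), closed B -> ~ B a ->
  exists f : X -> RR, [/\ continuous f, f a = 0, (forall b, B b -> f b = 1) &
     forall x, 0 <= f x <= 1].

Section construction.
Variable X : topologicalType.
Hypothesis lcX : locally_connected X.
Hypothesis ncX : forall x : X, ~ compact (connected_component [set: X] x).
Hypothesis crX : crR X.

Definition comp (x : X) := connected_component [set: X] x.

Lemma comp_refl x : comp x x.
Proof. exact: connected_component_refl. Qed.

Lemma comp_same x y : comp x y -> comp x = comp y.
Proof. exact: same_connected_component. Qed.

Lemma comp_disj x y : ~ comp x y -> comp x `&` comp y = set0.
Proof.
move=> nxy; apply/seteqP; split => // z [xz yz]; apply: nxy.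
by rewrite (comp_same xz) -(comp_same yz); exact: comp_refl.
Qed.

Lemma comp_open x : open (comp x).
Proof.
rewrite openE => y cy.
have [V [oV Vy cV _]] := lcX (filterT : nbhs y setT).
apply: (@filterS _ _ _ V); last exact: open_nbhs_nbhs.
rewrite (comp_same cy) /comp.
by apply: connected_component_max.
Qed.

Lemma comp_closed x : closed (comp x).
Proof. exact: component_closed closedT. Qed.

Definition goodF (C : set X) (F : set_system X) :=
  [/\ ProperFilter F, F C & forall y, C y -> ~ cluster F y].

Definition Fof (C : set X) : set_system X :=
  match pselect (exists F, goodF C F) with
  | left h => projT1 (cid h)
  | right _ => fun _ => True
  end.

Lemma FofP x : goodF (comp x) (Fof (comp x)).
Proof.
rewrite /Fof; case: pselect => [h|nh]; first exact: (projT2 (cid h)).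
exfalso; apply: (@ncX x) => F PF FC.
apply: contrapT => nn; apply: nh; exists F; split => // y Cy cl.
by apply: nn; exists y.
Qed.

Definition small (S : set X) :=
  (exists s : seq X, S `<=` [set y | exists2 c, c \in s & comp c y]) /\
  (forall x, exists2 G, Fof (comp x) G & S `&` G = set0).

Lemma small_sub S T : S `<=` T -> small T -> small S.
Proof.
move=> ST [[s Ts] TG]; split; first by exists s => y /ST /Ts.
move=> x; have [G FG TG0] := TG x; exists G => //.
by apply/seteqP; split => // y [/ST Ty Gy]; rewrite -TG0.
Qed.

Lemma small_U S T : small S -> small T -> small (S `|` T).
Proof.
move=> [[s Ss] SG] [[t Tt] TG]; split.
  exists (s ++ t) => y [/Ss [c cs cy]|/Tt [c ct cy]]; exists c => //;
  by rewrite mem_cat ?cs ?ct ?orbT.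
move=> x; have [G FG SG0] := SG x; have [H FH TH0] := TG x.
have [PF _ _] := FofP x.
exists (G `&` H); first exact: filterI.
apply/seteqP; split => // y [[Sy|Ty] [Gy Hy]].
  by have : (S `&` G) y by []; rewrite SG0.
by have : (T `&` H) y by []; rewrite TH0.
Qed.

Lemma small0 : small set0.
Proof.
split; first by exists [::].
move=> x; exists setT; last by rewrite set0I.
by have [PF _ _] := FofP x; exact: filterT.
Qed.

Lemma not_small_comp x : ~ small (comp x).
Proof.
move=> [_ /(_ x) [G FG CG0]].
have [PF FC _] := FofP x.
have : Fof (comp x) (comp x `&` G) by exact: filterI.
by rewrite CG0; apply: filter_not_empty.
Qed.

Lemma small_nbhd y : exists N, [/\ open N, N y & small N].
Proof.
have [PF FC ncl] := FofP y.
have := ncl y (comp_refl y).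
move=> /existsNP [A /existsNP [B /not_implyP [FA /not_implyP [nB AB]]]].
have [N [oN Ny NB]] : exists N, [/\ open N, N y & N `<=` B].
  by move: nB; rewrite nbhsE => -[N [oN Ny] NB]; exists N.
exists (N `&` comp y); split => //; first exact: openI (comp_open y).
  by split => //; exact: comp_refl.
split; first by exists [:: y] => z [_ cz]; exists y => //; rewrite inE.
move=> x; have [cxy|ncxy] := pselect (comp x y).
  exists A; first by rewrite (comp_same cxy).
  apply/seteqP; split => // z [[Nz _] Az]; apply: AB; exists z; split => //.
  exact: NB.
exists (comp x); first by have [] := FofP x.
apply/seteqP; split => // z [[_ yz] xz].
have : (comp x `&` comp y) z by [].
by rewrite comp_disj.
Qed.

Definition adm (g : X -> RR) :=
  [/\ continuous g, forall x, 0 <= g x & small [set x | 0 < g x]].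

Lemma adm0 : adm (fun _ => 0).
Proof.
split => //; first by move=> x; exact: cvg_cst.
by apply: (small_sub _ small0) => x /=; rewrite ltxx.
Qed.

Lemma admD g h : adm g -> adm h -> adm (fun x => g x + h x).
Proof.
move=> [cg g0 sg] [ch h0 sh]; split.
- by move=> x; apply: (@continuousD RR RR^o _ g h); [exact: cg | exact: ch].
- by move=> x; apply: addr_ge0.
- apply: (small_sub _ (small_U sg sh)) => x /=.
  have := g0 x; have := h0 x; rewrite !le_eqVlt.
  move=> /orP[/eqP<-|hp] /orP[/eqP<-|gp]; rewrite ?addr0 ?add0r ?ltxx;
  by [left|right|left].
Qed.

Lemma admZ g c : adm g -> 0 < c -> adm (fun x => c * g x).
Proof.
move=> [cg g0 sg] c0; split.
- by move=> x; apply: (@continuousM _ _ (fun=> c) g); [exact: cvg_cst | exact: cg].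
- by move=> x; apply: mulr_ge0 => //; exact: ltW.
- by apply: (small_sub _ sg) => x /=; rewrite pmulr_rgt0.
Qed.

Lemma adm_comp g x : adm g -> exists2 y, comp x y & g y < 1.
Proof.
move=> [cg g0 sg]; apply: contrapT => nn; apply: (@not_small_comp x).
apply: (small_sub _ sg) => y cy /=.
have : ~ (g y < 1) by move=> gy; apply: nn; exists y.
by move/negP; rewrite -leNgt => /(lt_le_trans ltr01).
Qed.

Lemma adm_bump x U : open U -> U x ->
  exists g, [/\ adm g, g x = 1, (forall y, 0 < g y -> U y) & forall y, g y <= 1].
Proof.
move=> oU Ux; have [N [oN Nx sN]] := small_nbhd x.
have cW : closed (~` (U `&` N)) by apply: open_closedC; exact: openI.
have [f [cf fx f1 f01]] := crX cW (fun h => h (conj Ux Nx)).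
exists (fun y => 1 - f y); split.
- split.
  + by move=> y; apply: (@continuousB RR RR^o _ (fun=> 1) f); [exact: cvg_cst | exact: cf].
  + by move=> y; rewrite subr_ge0; have /andP[] := f01 y.
  + apply: (small_sub _ sN) => y /=; rewrite subr_gt0.
    apply: contraPP => Ny; rewrite f1 ?ltxx // => -[_]; exact: Ny.
- by rewrite fx subr0.
- move=> y; rewrite subr_gt0; apply: contraPP => Uy; rewrite f1 ?ltxx //.
  by case.
- by move=> y; rewrite lerBlDr lerDl; have /andP[] := f01 y.
Qed.


Definition Y : Type := option X.
HB.instance Definition _ := Choice.on Y.

Definition Bg (g : X -> RR) : set Y :=
  fun y => if y is Some x then g x < 1 else True.

Definition ynbhs (y : Y) : set_system Y :=
  if y is Some x then Some @ nbhs x else filter_from adm Bg.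

Lemma Bg_sub g h : (forall x, 0 <= g x) -> (forall x, 0 <= h x) ->
  Bg (fun x => g x + h x) `<=` Bg g `&` Bg h.
Proof.
move=> g0 h0 [x|] //= ghx; split.
  by apply: le_lt_trans ghx; rewrite lerDl.
by apply: le_lt_trans ghx; rewrite lerDr.
Qed.

Let ynbhs_filter (y : Y) : ProperFilter (ynbhs y).
Proof.
case: y => [x|]; first exact: fmap_proper_filter.
apply: filter_from_proper; last by move=> g _; exists None.
apply: filter_from_filter; first by exists (fun=> 0); exact: adm0.
move=> g h ag ah; exists (fun x => g x + h x); first exact: admD.
by case: ag => _ g0 _; case: ah => _ h0 _; exact: Bg_sub.
Qed.

Let ynbhs_singleton (y : Y) U : ynbhs y U -> U y.
Proof. by case: y => [x /= /nbhs_singleton//|[g _]]; apply. Qed.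

Lemma open_lt_g (g : X -> RR) : continuous g -> open [set x : X | g x < 1].
Proof.
move=> cg; have -> : [set x : X | g x < 1] = g @^-1` [set r : RR | r < 1] by [].
by apply: open_comp; [move=> x _; exact: cg | exact: open_lt].
Qed.

Let ynbhs_nbhs (p : Y) (A : set Y) : ynbhs p A -> ynbhs p (ynbhs^~ A).
Proof.
case: p => [r /=|].
  rewrite nbhs_simpl nbhsE => -[U [oU Ur] USA/=].
  by exists U => //= z /=; rewrite nbhs_simpl nbhsE => Uz; exists U.
case=> g ag gA /=; exists g => // -[x|] gx; last by exists g.
rewrite /= nbhs_simpl nbhsE; exists [set x : X | g x < 1].
  by split => //; apply: open_lt_g; case: ag.
by move=> z zg; apply: gA.
Qed.

HB.instance Definition _ := hasNbhs.Build Y ynbhs.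

HB.instance Definition _ := @Nbhs_isNbhsTopological.Build Y
  ynbhs_filter ynbhs_singleton ynbhs_nbhs.

Lemma nbhs_SomeE x (A : set Y) : nbhs (Some x : Y) A = nbhs x (Some @^-1` A).
Proof. by []. Qed.

Lemma nbhs_NoneE (A : set Y) : nbhs (None : Y) A = exists2 g, adm g & Bg g `<=` A.
Proof. by []. Qed.

Lemma Some_cont : continuous (Some : X -> Y).
Proof. by move=> x U. Qed.

Lemma Some_inj : injective (Some : X -> Y).
Proof. by move=> a b []. Qed.

Lemma open_Some (U : set X) : open U -> open (Some @` U : set Y).
Proof.
rewrite !openE => oU _ [x Ux <-].
have : nbhs x (Some @^-1` (Some @` U)) by apply: filterS (oU _ Ux) => z Uz; exists z.
exact.
Qed.

Lemma open_Bg g : adm g -> open (Bg g).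
Proof.
move=> ag; rewrite openE => -[x|] gx; last by exists g.
change (nbhs x [set z : X | g z < 1]); apply: open_nbhs_nbhs; split => //.
by apply: open_lt_g; case: ag.
Qed.

Lemma cont_Y (f : Y -> RR) : continuous (f \o Some) ->
  (forall e : RR, 0 < e -> exists2 g, adm g &
      forall x, g x < 1 -> `|f None - f (Some x)| < e) ->
  continuous f.
Proof.
move=> cfS fN [x|] U /=.
  by move=> nU; exact: cfS.
move=> /nbhs_ballP [e e0 eU].
have [g ag gx] := fN e e0; exists g => // -[y|] /= gy.
  by apply: eU; rewrite /ball /=; exact: gx.
by apply: eU; exact: ballxx.
Qed.


Lemma Y_T1 : accessible_space X -> accessible_space Y.
Proof.
move=> t1X [a|] [b|] // ab.
- have ab' : a != b by apply: contraNneq ab => ->.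
  have [A [oA aA bA]] := t1X _ _ ab'.
  exists (Some @` A); split; first exact: open_Some.
    by rewrite inE; exists a => //; rewrite -inE.
  rewrite inE => -[z zA [ez]]; move: bA; rewrite inE -ez; apply.
  by [].
- exists (range (Some : X -> Y)); split.
  + by apply: open_Some; exact: openT.
  + by rewrite inE; exists a.
  + by rewrite inE => -[].
- have [g [ag gb _ _]] := @adm_bump b setT openT I.
  exists (Bg g); split; first exact: open_Bg.
    by rewrite inE.
  by rewrite inE /= gb ltxx.
Qed.

Lemma Y_dense (x0 : X) : dense (range (Some : X -> Y)).
Proof.
move=> O [[x|] Ox] oO.
  by exists (Some x); split => //; exists x.
have := oO; rewrite openE => /(_ _ Ox) [g ag gO].
have [z _ gz] := adm_comp x0 ag.
by exists (Some z); split; [apply: gO | exists z].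
Qed.

Lemma Y_embedding : embedding (Some : X -> Y).
Proof.
split; first exact: Some_inj.
  exact: Some_cont.
move=> U oU; exists (Some @` U); first exact: open_Some.
by apply/seteqP; split => [y [x Ux <-]|y [] //]; split => //; exists x.
Qed.

Lemma None_closure x : closure (Some @` comp x : set Y) None.
Proof.
move=> B [g ag gB].
have [z cz gz] := adm_comp x ag.
by exists (Some z); split; [exists z | apply: gB].
Qed.

Lemma Y_conn (x0 : X) : connected [set: Y].
Proof.
have -> : [set: Y] = \bigcup_(x in [set: X]) closure (Some @` comp x : set Y).
  apply/seteqP; split => // -[y|] _.
    by exists y => //; apply: subset_closure; exists y => //; exact: comp_refl.
  by exists x0 => //; exact: None_closure.
apply: bigcup_connected.
  by exists None => x _; exact: None_closure.
move=> x _; apply: connected_closure; apply: connected_continuous_connected.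
  exact: component_connected.
by apply: continuous_subspaceT; exact: Some_cont.
Qed.

Lemma Y_one_point : ~` range (Some : X -> Y) = [set None].
Proof.
apply/seteqP; split => [[x|] //|y ->]; last by case.
by move=> h; exfalso; apply: h; exists x.
Qed.

Lemma closed_Some_img (Kc : set X) g : adm g -> closed Kc ->
  (forall x, Kc x -> 1 <= g x) -> closed (Some @` Kc : set Y).
Proof.
move=> ag cK Kg; rewrite -openC openE => -[x|] nK.
  have nKx : ~ Kc x by move=> Kx; apply: nK; exists x.
  have : nbhs x (~` Kc).
    by apply: open_nbhs_nbhs; split => //; rewrite openC.
  move=> h; apply: (@filterS _ _ _ (~` Kc)) h => z nKz [w Kw [ew]].
  by apply: nKz; rewrite -ew.
exists g => // -[z|] //= gz [w Kw [ew]].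
by move: (Kg _ Kw); rewrite ew leNgt gz.
Qed.

Lemma unSome_cont (W : topologicalType) (h : W -> X) :
  continuous ((Some : X -> Y) \o h) -> continuous h.
Proof.
move=> /continuousP ch; apply/continuousP => U oU.
have -> : h @^-1` U = ((Some : X -> Y) \o h) @^-1` (Some @` U).
  apply/seteqP; split => w /=; first by move=> Uh; exists (h w).
  by case=> x Ux [<-].
by apply: ch; exact: open_Some.
Qed.


Section homeo.
Variables (g : X -> RR) (c : X).

Definition Ai : set (set_type (~` Bg g)) :=
  [set z | exists2 x, set_val z = Some x & comp c x].

Definition Kc : set (set_type (comp c)) := [set k | 1 <= g (set_val k)].

Lemma phi_mem1 (k : set_type Kc) : (~` Bg g) (Some (set_val (set_val k))).
Proof.
have := set_valP k; rewrite /Kc /= leNgt => /negP h.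
by rewrite /setC /Bg /=; exact: h.
Qed.

Definition phi1 (k : set_type Kc) : set_type (~` Bg g) :=
  exist _ (Some (set_val (set_val k))) (mem_set (@phi_mem1 k)).

Lemma phi_mem2 (k : set_type Kc) : Ai (phi1 k).
Proof. by exists (set_val (set_val k)) => //; exact: set_valP. Qed.

Definition phi (k : set_type Kc) : set_type Ai :=
  exist _ (phi1 k) (mem_set (@phi_mem2 k)).

Lemma psi_ex (a : set_type Ai) :
  exists2 x, set_val (set_val a) = Some x & comp c x.
Proof. exact: set_valP a. Qed.

Lemma psi_mem1 (a : set_type Ai) : comp c (odflt c (set_val (set_val a))).
Proof. by have [x -> cx] := @psi_ex a. Qed.

Definition psi1 (a : set_type Ai) : set_type (comp c) :=
  exist _ (odflt c (set_val (set_val a))) (mem_set (@psi_mem1 a)).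

Lemma psi_mem2 (a : set_type Ai) : Kc (psi1 a).
Proof.
change (1 <= g (odflt c (set_val (set_val a)))); have [x ex _] := @psi_ex a; rewrite ex /=.
have : (~` Bg g) (set_val (set_val a)) := set_valP (set_val a); rewrite ex /= => /negP; by rewrite -leNgt.
Qed.

Definition psi (a : set_type Ai) : set_type Kc :=
  exist _ (psi1 a) (mem_set (@psi_mem2 a)).

Lemma homeo_Ai : homeomorphic (set_type Kc) (set_type Ai).
Proof.
exists phi, psi; split; [|split; [|split]].
- apply: st_cont_into; apply: st_cont_into.
  have -> : set_val \o (set_val \o phi) =
            (Some : X -> Y) \o (set_val \o (set_val : set_type Kc -> set_type (comp c))).
    by [].
  move=> k; apply: continuous_comp; last exact: Some_cont.
  apply: continuous_comp; exact: st_val_cont.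
- apply: st_cont_into; apply: st_cont_into; apply: unSome_cont.
  have -> : (Some : X -> Y) \o (set_val \o (set_val \o psi)) =
            set_val \o (set_val : set_type Ai -> set_type (~` Bg g)).
    apply/funext => a /=.
    change (Some (odflt c (set_val (set_val a))) = set_val (set_val a) :> Y).
    by have [x -> _] := @psi_ex a.
  move=> a; apply: continuous_comp; exact: st_val_cont.
- by move=> k; apply: val_inj; apply: val_inj.
- move=> a; apply: val_inj; apply: val_inj => /=.
  change (Some (odflt c (set_val (set_val a))) = set_val (set_val a) :> Y).
  by have [x -> _] := @psi_ex a.
Qed.

End homeo.

Lemma closed_ge_g (g : X -> RR) : continuous g -> closed [set x | 1 <= g x].
Proof.
move=> cg; have -> : [set x | 1 <= g x] = g @^-1` [set r : RR | 1 <= r] by [].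
by apply: (proj1 (continuous_closedP _) cg); exact: closed_ge.
Qed.

Lemma Y_P (P : topologicalType -> Prop) (x0 : X) :
  topological_property P -> closed_hereditary P -> co_local P ->
  finite_closed_sums P -> (forall x, P (set_type (comp x))) -> P Y.
Proof.
move=> tpP chP clP fsP HP.
pose Bs := [set b : set Y | exists2 g, adm g & b = Bg g].
apply: (clP Y None Bs).
  split.
    by move=> b [g ag ->]; split; [exact: open_Bg | by []].
  move=> U nU; have [g ag gU] : exists2 g, adm g & Bg g `<=` U by exact: nU.
  by exists (Bg g) => //; exists g.
move=> b [g ag ->].
have [cg g0 [[s ss] _]] := ag.
apply: (@fsP (set_type (~` Bg g)) (size s) (fun i => @Ai g (nth x0 s i))).
- move=> i; set cc := nth x0 s i.
  have -> : @Ai g cc = set_val @^-1` (Some @` ([set x | 1 <= g x] `&` comp cc)).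
    apply/seteqP; split => z.
      case=> x ex cx; exists x; last by rewrite ex.
      split => //.
      have : (~` Bg g) (set_val z) := set_valP z.
      by rewrite ex /= leNgt => /negP.
    by case=> x [gx cx] ex; exists x.
  apply: (proj1 (continuous_closedP _) (@st_val_cont _ _)).
  apply: (closed_Some_img ag); last by move=> x [].
  by apply: closedI; [exact: closed_ge_g | exact: comp_closed].
- move=> i; apply: tpP (@homeo_Ai g (nth x0 s i)) _.
  apply: chP (HP _).
  have -> : @Kc g (nth x0 s i) = set_val @^-1` [set x | 1 <= g x] by [].
  by apply: (proj1 (continuous_closedP _) (@st_val_cont _ _)); exact: closed_ge_g.
- apply/seteqP; split => // z _.
  have : (~` Bg g) (set_val z) := set_valP z.
  case ez: (set_val z) => [x|] //= nx.
  have gx1 : 1 <= g x by rewrite leNgt; apply/negP.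
  have [cc ccs ccx] := ss x (lt_le_trans ltr01 gx1).
  have ccl : (index cc s < size s)%N by rewrite index_mem.
  exists (Ordinal ccl) => //=.
  by exists x; rewrite ?nth_index.
Qed.


Lemma admZe g e : adm g -> 0 < e -> exists2 h, adm h &
  forall z, h z < 1 -> g z < e.
Proof.
move=> ag e0; exists (fun z => e^-1 * g z); first by apply: admZ; rewrite ?invr_gt0.
by move=> z; rewrite ltr_pdivrMl // mulr1.
Qed.

Lemma Y_cr : crR Y.
Proof.
move=> [x|] B cB nB.
- have oU : open (Some @^-1` (~` B) : set X).
    by apply: (proj1 (continuousP _) Some_cont); exact: closed_openC.
  have [g [ag gx gU g1]] := adm_bump oU nB.
  have [cg g0 _] := ag.
  exists (fun y => if y is Some z then 1 - g z else 1); split.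
  + apply: cont_Y.
      by move=> z; apply: (@continuousB RR RR^o _ (fun=> 1) g); [exact: cvg_cst|exact: cg].
    move=> e e0; have [h ah he] := admZe ag e0; exists h => // z /he gz.
    by rewrite opprB addrCA subrr addr0 ger0_norm.
  + by rewrite /= gx subrr.
  + move=> [z|] Bz //=.
    have : ~ 0 < g z by move/gU.
    move/negP; rewrite -leNgt => gz0.
    have -> : g z = 0 by apply/eqP; rewrite eq_le gz0 g0.
    by rewrite subr0.
  + move=> [z|] /=; last by rewrite lexx ler01.
    by rewrite subr_ge0 g1 /= lerBlDr lerDl g0.
- have : nbhs (None : Y) (~` B).
    by apply: open_nbhs_nbhs; split => //; exact: closed_openC.
  move=> [g ag gB]; have [cg g0 _] := ag.
  exists (fun y => if y is Some z then Num.min (g z) 1 else 0); split.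
  + apply: cont_Y.
      by move=> z; apply: (@continuous_min _ _ g (fun=> 1)); [exact: cg|exact: cvg_cst].
    move=> e e0; have [h ah he] := admZe ag e0; exists h => // z /he gz.
    rewrite sub0r normrN ger0_norm; last by rewrite le_min g0 ler01.
    by apply: le_lt_trans gz; rewrite ge_min lexx.
  + by [].
  + move=> [z|] Bz /=; last by exfalso; apply: (gB None).
    rewrite min_r //; rewrite leNgt; apply/negP => gz.
    by apply: (gB (Some z)).
  + move=> [z|] /=; last by rewrite lexx ler01.
    by rewrite le_min g0 ler01 ge_min lexx orbT.
Qed.

Lemma sep_core (A B : set Y) (g : X -> RR) : adm g ->
  (forall x, B (Some x) -> 1 <= g x) -> ~ B None ->
  (exists U' V', [/\ open U', open V',
     (Some @^-1` A) `|` [set x | g x <= 2^-1] `<=` U',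
     Some @^-1` B `<=` V' & U' `&` V' = set0]) ->
  exists U V, [/\ open U, open V, A `<=` U, B `<=` V & U `&` V = set0].
Proof.
move=> ag gB nBN [U' [V' [oU oV AU BV UV]]].
exists (fun y => if y is Some x then U' x else True), (Some @` V'); split.
- rewrite openE => -[x|] /= Ux.
    change (nbhs x U'); exact: open_nbhs_nbhs.
  exists (fun z => 2 * g z); first exact: admZ.
  move=> [z|] //= gz; apply: AU; right => /=; lra.
- exact: open_Some.
- by move=> [x|] Ax //; apply: AU; left.
- by move=> [x|] Bx //; exists x => //; apply: BV.
- apply/seteqP; split => // -[x|] [Ux [z Vz ez]] //.
  have exz : z = x by case: ez.
  have : (U' `&` V') x by split => //; rewrite -exz.
  by rewrite UV.
Qed.

Lemma closed_le_g (g : X -> RR) c : continuous g -> closed [set x | g x <= c].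
Proof.
move=> cg; have -> : [set x | g x <= c] = g @^-1` [set r : RR | r <= c] by [].
by apply: (proj1 (continuous_closedP _) cg); exact: closed_le.
Qed.

Lemma adm_of_open (B : set Y) : open B -> B None ->
  exists2 g, adm g & forall x, ~ B (Some x) -> 1 <= g x.
Proof.
move=> oB BN; have : nbhs (None : Y) B by apply: open_nbhs_nbhs.
move=> [g ag gB]; exists g => // x nBx; rewrite leNgt; apply/negP => gx.
by apply: nBx; apply: (gB (Some x)).
Qed.

Lemma Y_normal : normal_space X -> normal_space Y.
Proof.
move=> nX; apply/(@normal_openP RR).
have main : forall A B : set Y, closed A -> closed B -> A `&` B = set0 -> ~ B None ->
    exists U V, [/\ open U, open V, A `<=` U, B `<=` V & U `&` V = set0].
  move=> A B cA cB AB nBN.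
  have [g ag gB] := @adm_of_open (~` B) (closed_openC cB) nBN.
  have [cg g0 _] := ag.
  apply: (sep_core ag) => //; first by move=> x Bx; apply: gB.
  move/(@normal_openP RR): nX; apply.
  - apply: closedU; last exact: closed_le_g.
    by apply: (proj1 (continuous_closedP _) Some_cont).
  - by apply: (proj1 (continuous_closedP _) Some_cont).
  - apply/seteqP; split => // x [[Ax|gx] Bx].
      by have : (A `&` B) (Some x) by []; rewrite AB.
    by have := gB x (fun h => h Bx); move: gx => /=; lra.
move=> A B cA cB AB; have [BN|nBN] := pselect (B None); last exact: main.
have nAN : ~ A None by move=> AN; have : (A `&` B) None by []; rewrite AB.
have BA : B `&` A = set0 by rewrite setIC.
have [V [U [oV oU BV AU VU]]] := main B A cB cA BA nAN.
by exists U, V; split => //; rewrite setIC.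
Qed.

Lemma cl_pre (A : set Y) : closure (Some @^-1` A) `<=` Some @^-1` closure A.
Proof.
move=> x clx N nN; have [z [Az Nz]] := clx _ (nN : nbhs x (Some @^-1` N)).
by exists (Some z).
Qed.

Lemma Y_sep : sepprop X -> sepprop Y.
Proof.
move=> sX.
have main : forall A B : set Y, closure A `&` B = set0 -> A `&` closure B = set0 ->
    ~ closure B None ->
    exists U V, [/\ open U, open V, A `<=` U, B `<=` V & U `&` V = set0].
  move=> A B clAB AclB nBN.
  have [g ag gB] := @adm_of_open (~` closure B)
    (closed_openC (@closed_closure _ _)) nBN.
  have [cg g0 _] := ag.
  apply: (sep_core ag).
  - by move=> x Bx; apply: gB => /(_ (subset_closure Bx)).
  - by move=> BN; apply: nBN; exact: subset_closure.
  apply: sX.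
  - have clE := esym ((closure_id _).1 (@closed_le_g g 2^-1 cg)).
    rewrite closureU clE.
    apply/seteqP; split => // x [[clx|gx] Bx].
      have : (closure A `&` B) (Some x) by split => //; exact: cl_pre.
      by rewrite clAB.
    have BxY : B (Some x) := Bx.
    have := gB x (fun h => h (subset_closure BxY)); move: gx => /=; lra.
  - apply/seteqP; split => // x [[Ax|gx] clx]; have := cl_pre clx => clBx.
      by have : (A `&` closure B) (Some x) by []; rewrite AclB.
    by have := gB x (fun h => h clBx); move: gx => /=; lra.
move=> A B clAB AclB.
have [nBN|BN] := pselect (~ closure B None); first exact: main.
have [nAN|AN] := pselect (~ closure A None).
  have h1 : closure B `&` A = set0 by rewrite setIC.
  have h2 : B `&` closure A = set0 by rewrite setIC.
  have [V [U [oV oU BV AU VU]]] := main B A h1 h2 nAN.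
  by exists U, V; split => //; rewrite setIC.
have nA : ~ A None.
  by move=> h; apply: BN => clB; have : (A `&` closure B) None by []; rewrite AclB.
have nB : ~ B None.
  by move=> h; apply: AN => clA; have : (closure A `&` B) None by []; rewrite clAB.
have e1 : closure (Some @^-1` A) `&` (Some @^-1` B) = set0.
  apply/seteqP; split => // x [/cl_pre clx Bx].
  by have : (closure A `&` B) (Some x) by []; rewrite clAB.
have e2 : (Some @^-1` A) `&` closure (Some @^-1` B) = set0.
  apply/seteqP; split => // x [Ax /cl_pre clx].
  by have : (A `&` closure B) (Some x) by []; rewrite AclB.
have [U' [V' [oU oV AU BV UV]]] := sX (Some @^-1` A) (Some @^-1` B) e1 e2.
exists (Some @` U'), (Some @` V'); split.
- exact: open_Some.
- exact: open_Some.
- by move=> [x|] Ax //; exists x => //; apply: AU.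
- by move=> [x|] Bx //; exists x => //; apply: BV.
- apply/seteqP; split => // _ [[x Ux <-] [z Vz ez]].
  have exz : z = x by case: ez.
  have : (U' `&` V') x by split => //; rewrite -exz.
  by rewrite UV.
Qed.

End construction.

Lemma cr_crR (T : topologicalType) : completely_regular T -> crR T.
Proof.
move=> h a B cB nB; have [f [cf [fa [fB f01]]]] := h a B cB nB.
exists f; split => // x; have [h1 h2] := f01 x.
by apply/andP; split; apply/RleP.
Qed.

Lemma crR_cr (T : topologicalType) : crR T -> completely_regular T.
Proof.
move=> h a B cB nB; have [f [cf fa fB f01]] := h a B cB nB.
exists f; split => //; split => //; split => // x.
by have /andP[h1 h2] := f01 x; split; apply/RleP.
Qed.

Lemma normal_crR (T : topologicalType) :
  normal_space T -> accessible_space T -> crR T.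
Proof.
move=> nT aT a B cB nB.
have := @normal_completely_regular RR T nT aT a B cB nB.
move/(@uniform_separatorP _ RR) => [f [cf f01 fa fB]].
exists f; split => //.
- by apply: fa; exists a.
- by move=> b Bb; apply: fB; exists b.
- by move=> x; have := f01 (f x) (imageT f x); rewrite /= in_itv.
Qed.

Unset Implicit Arguments.
Local Close Scope ring_scope.

Theorem lemma2p4 (i : sep_index) (P : topologicalType -> Prop) :
  topological_property P -> closed_hereditary P -> co_local P ->
  finite_closed_sums P ->
  forall X : topologicalType, (exists x : X, True) ->
  locally_connected X -> Ti i X ->
  (forall x : X, ~ compact (connected_component [set: X] x) /\
                 P (set_type (connected_component [set: X] x))) ->
  exists (Y : topologicalType) (e : X -> Y),
    one_point_connectification e /\ Ti i Y /\ P Y.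
Proof.
move=> tpP chP clP fsP X [x0 _] lcX TiX HX.
have ncX : forall x : X, ~ compact (connected_component [set: X] x).
  by move=> x; case: (HX x).
have HP : forall x : X, P (set_type (comp x)) by move=> x; case: (HX x).
have t1X : accessible_space X by case: i TiX => -[].
have crX : crR X.
  case: i TiX => -[h _].
  - exact: cr_crR.
  - exact: normal_crR.
  - by apply: normal_crR => //; apply: sep_normal; exact: HN_sep.
exists (Y X), Some; split; [|split].
- split.
  + exact: Y_embedding.
  + exact: (Y_conn x0).
  + exact: (Y_dense x0).
  + by exists None; exact: Y_one_point.
- case: i TiX => -[h _]; (split; [|exact: Y_T1]).
  + by apply: crR_cr; exact: Y_cr.
  + exact: Y_normal.
  + by apply: sep_HN; apply: Y_sep; exact: HN_sep.
- exact: (Y_P ncX x0 tpP chP clP fsP HP).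
Qed.
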